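(* Let $n \geq 5$ and write $n = 4k + r$ with integers $k \geq 1$ and $0 \leq r < 4$. Consider the following game for $n$ collaborating classical players $P_1,\dots,P_n$, who may share arbitrary classical randomness (correlated information) fixed before the game starts, but no quantum information. A pair of distinct players is chosen uniformly at random among all $\binom{n}{2}$ pairs; neither chosen player learns which other player was chosen (the remaining $n-2$ players may know which pair was chosen). The remaining $n-2$ players may communicate among themselves and then announce a single ''hint'' bit $b$, which both chosen players hear. Each chosen player then, without any communication with the other chosen player, outputs a bit; the game is won if and only if the two output bits are different. Then for every classical strategy, the probability of losing the game is at least \[ p(n) = (4-r)\cdot \frac{k}{n}\cdot \frac{k-1}{n-1} + r\cdot \frac{k+1}{n}\cdot \frac{k}{n-1}. \] *)

(* Defs.v *)
From HB Require Import structures.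
From mathcomp Require Import all_boot all_order all_algebra.
Set Implicit Arguments. Unset Strict Implicit. Unset Printing Implicit Defensive.
Import Order.TTheory GRing.Theory Num.Theory.
Local Open Scope ring_scope.

(* A classical strategy with shared randomness:
   - Omega : finite sample space of the shared random string, with
     probability weights mu;
   - hint w i j : the hint bit announced by the non-chosen players when the
     chosen pair is {i, j} (only used with i < j) and the shared random
     string is w;
   - out w i b : the output bit of chosen player i upon hearing hint b,
     given shared random string w (player i does not know its partner). *)

Definition is_distr (Omega : finType) (R : numDomainType) (mu : Omega -> R) :=
  (forall w, 0 <= mu w) /\ \sum_(w : Omega) mu w = 1.

Definition lose_ind (R : numDomainType) (n : nat) (Omega : finType)
  (hint : Omega -> 'I_n -> 'I_n -> bool) (out : Omega -> 'I_n -> bool -> bool)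
  (w : Omega) (i j : 'I_n) : R :=
  if out w i (hint w i j) == out w j (hint w i j) then 1 else 0.

Definition lose_prob (R : numFieldType) (n : nat) (Omega : finType)
  (mu : Omega -> R)
  (hint : Omega -> 'I_n -> 'I_n -> bool) (out : Omega -> 'I_n -> bool -> bool)
  : R :=
  ('C(n, 2))%:R^-1 *
  \sum_(i : 'I_n) \sum_(j : 'I_n | (i < j)%N) \sum_(w : Omega)
     mu w * lose_ind R hint out w i j.

Definition p_bound (R : numFieldType) (n : nat) : R :=
  let k := (n %/ 4)%N in let r := (n %% 4)%N in
  (4 - r%:R) * (k%:R / n%:R) * ((k%:R - 1) / (n%:R - 1))
  + r%:R * ((k%:R + 1) / n%:R) * (k%:R / (n%:R - 1)).

(* Main.v *)
Require Import Defs.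
From HB Require Import structures.
From mathcomp Require Import all_boot all_order all_algebra.
From mathcomp Require Import zify.
From mathcomp Require Import ring lra.
Import Order.TTheory GRing.Theory Num.Theory.
Lemma sq_bound (a k : nat) : (2 * k + 1) * a <= a * a + k * k + k.
Proof. have [h|h] := leqP a k; nia. Qed.

Lemma sym_split (n : nat) (f : 'I_n -> 'I_n -> nat) :
  (forall i j : 'I_n, f i j = f j i) ->
  \sum_(i : 'I_n) \sum_(j : 'I_n) f i j = 2 * (\sum_(i : 'I_n) \sum_(j : 'I_n | (i < j)%N) f i j) + \sum_(i : 'I_n) f i i.
Proof.
move=> fs.
have E : forall i : 'I_n, \sum_(j : 'I_n) f i j = \sum_(j : 'I_n | (i < j)%N) f i j + \sum_(j : 'I_n | (j < i)%N) f i j + f i i.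
  move=> i; rewrite (bigID (fun j : 'I_n => (i < j)%N)) /= -addnA; congr (_ + _).
  rewrite (bigD1 i) /= ?ltnn // addnC; congr (_ + _).
  apply: eq_bigl => j; rewrite -leqNgt.
  case: (ltngtP i j) => //= h.
    by apply/eqP => e; rewrite e ltnn in h.
  by have /val_inj -> := h; rewrite eqxx.
rewrite (eq_bigr _ (fun i _ => E i)) !big_split /=; congr (_ + _).
rewrite mul2n -addnn; congr (_ + _).
rewrite (exchange_big_dep xpredT) //=.
by apply: eq_bigr => i _; apply: eq_bigr => j _; rewrite fs.
Qed.

Lemma comb (n : nat) (T : 'I_n -> bool * bool) :
  4 * (n %/ 4) * (n %/ 4) + 2 * (n %% 4) * (n %/ 4) <= 2 * (\sum_(i : 'I_n) \sum_(j : 'I_n | (i < j)%N) (T i == T j : nat)) + 4 * (n %/ 4).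
Proof.
set k := n %/ 4; set r := n %% 4.
set A := fun t => \sum_(i : 'I_n) (T i == t : nat).
have Sa : \sum_(i : 'I_n) \sum_(j : 'I_n) (T i == T j : nat) = 2 * (\sum_(i : 'I_n) \sum_(j : 'I_n | (i < j)%N) (T i == T j : nat)) + n.
  rewrite sym_split; last by move=> i j /=; rewrite eq_sym.
  congr (_ + _); by rewrite (eq_bigr (fun _ => 1)) ?sum_nat_const ?card_ord ?muln1 // => i _; rewrite eqxx.
have Sb : \sum_(i : 'I_n) \sum_(j : 'I_n) (T i == T j : nat) = \sum_t A t * A t.
  have e : forall i j : 'I_n, (T i == T j : nat) = \sum_t ((T i == t) * (T j == t)).
    move=> i j; rewrite (bigD1 (T i)) //= eqxx mul1n big1 ?addn0; first by rewrite eq_sym.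
    move=> t /negbTE.
    by rewrite eq_sym => ->.
  rewrite (eq_bigr (fun i => \sum_(j : 'I_n) \sum_(t : bool * bool) ((T i == t) * (T j == t)))); last first.
    by move=> i _; apply: eq_bigr => j _; exact: e.
  rewrite (eq_bigr (fun i => \sum_(t : bool * bool) \sum_(j : 'I_n) ((T i == t) * (T j == t)))); last first.
    by move=> i _; rewrite exchange_big.
  rewrite exchange_big /=.
  apply: eq_bigr => t _; rewrite /A big_distrl /=; apply: eq_bigr => i _.
  by rewrite big_distrr.
have Sc : \sum_t A t = n.
  rewrite /A exchange_big /= -[n in RHS]card_ord -sum1_card; apply: eq_bigr => i _.
  by rewrite (bigD1 (T i)) //= eqxx big1 // => t /negbTE; rewrite eq_sym => ->.
have Sd : (2 * k + 1) * n <= \sum_t A t * A t + 4 * (k * k + k).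
  rewrite -Sc big_distrr /=.
  have -> : 4 * (k * k + k) = \sum_(t : bool * bool) (k * k + k) by rewrite sum_nat_const card_prod card_bool.
  rewrite -big_split /=; apply: leq_sum => t _; have := sq_bound (A t) k; lia.
have hn : n = 4 * k + r by rewrite /k /r mulnC -divn_eq.
rewrite -Sb Sa in Sd.
have hr : r < 4 by rewrite /r ltn_mod.
move: Sd; set P := (\sum_(i : 'I_n) _) => Sd.
nia.
Qed.

Local Open Scope ring_scope.

Theorem mainTheorem1 (R : realFieldType) (n : nat) (hn : (5 <= n)%N)
  (Omega : finType) (mu : Omega -> R)
  (hint : Omega -> 'I_n -> 'I_n -> bool) (out : Omega -> 'I_n -> bool -> bool) :
  is_distr mu -> p_bound R n <= lose_prob mu hint out.
Proof.
move=> [mu0 mu1].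
set T := fun w i => (out w i false, out w i true).
set X := fun w => \sum_(i : 'I_n) \sum_(j : 'I_n | (i < j)%N) lose_ind R hint out w i j.
set K : R := (n %/ 4)%:R; set Rr : R := (n %% 4)%:R; set N : R := n%:R.
set q : R := (4 * K * K + 2 * Rr * K - 4 * K) / 2.
have HX : forall w, q <= X w.
  move=> w.
  have c := @comb n (T w).
  have c' : 4 * K * K + 2 * Rr * K <= 2 * (\sum_(i : 'I_n) \sum_(j : 'I_n | (i < j)%N) (T w i == T w j : nat))%:R + 4 * K.
    move: c; rewrite -(ler_nat R) !natrD !natrM -/K -/Rr => c; lra.
  have h2 : (\sum_(i : 'I_n) \sum_(j : 'I_n | (i < j)%N) (T w i == T w j : nat))%:R <= X w.
    rewrite natr_sum; apply: ler_sum => i _; rewrite natr_sum; apply: ler_sum => j _.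
    rewrite /lose_ind; case: eqP => [/pair_equal_spec [e0 e1]|_].
      by case: (hint w i j); rewrite ?e0 ?e1 eqxx.
    by case: ifP.
  rewrite /q; lra.
have HL : lose_prob mu hint out = ('C(n, 2))%:R^-1 * \sum_(w : Omega) mu w * X w.
  rewrite /lose_prob; congr (_ * _).
  rewrite (eq_bigr (fun i : 'I_n => \sum_(w : Omega) \sum_(j : 'I_n | (i < j)%N) mu w * lose_ind R hint out w i j)); last first.
    by move=> i _; rewrite exchange_big.
  rewrite exchange_big /=; apply: eq_bigr => w _; rewrite /X mulr_sumr; apply: eq_bigr => i _.
  by rewrite mulr_sumr.
have HS : q <= \sum_(w : Omega) mu w * X w.
  have -> : q = \sum_(w : Omega) mu w * q by rewrite -mulr_suml mu1 mul1r.
  by apply: ler_sum => w _; apply: ler_wpM2l.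
have HC : ('C(n, 2))%:R = N * (N - 1) / 2 :> R.
  have e : ('C(n, 2) * 2 = n * n.-1)%N by rewrite (bin_ffact n 2) ffactnS ffactn1.
  have e' : ('C(n, 2))%:R * 2 = N * (N - 1) :> R.
    by rewrite -natrM e natrM /N -subn1 natrB //; lia.
  by rewrite -e' mulfK // pnatr_eq0.
have Npos : 0 < N by rewrite /N ltr0n; lia.
have N1pos : 0 < N - 1 by rewrite /N subr_gt0 ltr1n; lia.
have Cpos : 0 < ('C(n, 2))%:R^-1 :> R by rewrite invr_gt0 HC; apply: divr_gt0 => //; apply: mulr_gt0.
rewrite HL; apply: le_trans (ler_wpM2l (ltW Cpos) HS).
rewrite /p_bound -/K -/Rr -/N HC /q.
rewrite le_eqVlt; apply/orP; left; apply/eqP.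
field.
by rewrite (gt_eqF N1pos) (gt_eqF Npos).
Qed.
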